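(* Let $G=(V,E)$ be an acyclic finite directed graph, $\Gamma\subset V$ a subset containing all sinks and sources of $G$ with $V\setminus\Gamma\neq\emptyset$, and $z\in\mathrm{Sym}_d^\Gamma$. For $x\in\mathrm{Sym}_d^V(z)$, both $\phi_d(x)\to\infty$ and $\chi_d(x)\to\infty$ as $\|x\|\to\infty$, where $\|\cdot\|$ is any norm on $\mathrm{Sym}_d^V$.
   Context: Edges are ordered pairs $(v,w)$ with $v\neq w$, written $v\to w$; a sink has no outgoing edges, a source no incoming edges; acyclic means no directed cycles. $\mathrm{Sym}_d$ is the space of $d\times d$ real symmetric matrices, $\mathrm{Sym}_d^V$ arrays $x=(x_v)_{v\in V}$, and $\mathrm{Sym}_d^V(z)=\{x\in\mathrm{Sym}_d^V:x_v=z_v\ \forall v\in\Gamma\}$. $\phi_d(x)=\sum_{v\to w}\operatorname{tr}[e^{x_v}e^{-x_w}]$ and $\chi_d(x)=\sum_{v\to w}\operatorname{tr}[e^{x_v-x_w}]$ (matrix exponentials). *)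

(* Defs.v *)
From HB Require Import structures.
From mathcomp Require Import all_boot all_order all_algebra.
From mathcomp Require Import all_classical all_reals all_analysis.
Set Implicit Arguments. Unset Strict Implicit. Unset Printing Implicit Defensive.
Import Order.TTheory GRing.Theory Num.Theory.
Import numFieldNormedType.Exports.
Local Open Scope ring_scope.

Definition expmx {R : realType} (d : nat) (A : 'M[R]_d) : 'M[R]_d :=
  limn (series (fun k : nat => (k`!%:R)^-1 *: A ^+ k)).

Definition symmx {R : realType} (d : nat) (A : 'M[R]_d) : Prop := A^T = A.

Definition loopless {V : finType} (E : rel V) : Prop := forall v, ~~ E v v.

Definition acyclic {V : finType} (E : rel V) : Prop :=
  forall (v : V) (p : seq V), p != [::] -> path E v p -> last v p != v.

Definition is_sink {V : finType} (E : rel V) (v : V) : Prop := forall w, ~~ E v w.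
Definition is_source {V : finType} (E : rel V) (v : V) : Prop := forall w, ~~ E w v.

Definition SymV {R : realType} {V : finType} (d : nat) (x : V -> 'M[R]_d) : Prop :=
  forall v, symmx (x v).
Definition SymVz {R : realType} {V : finType} (d : nat) (Gamma : {set V})
  (z : V -> 'M[R]_d) (x : V -> 'M[R]_d) : Prop :=
  SymV x /\ forall v, v \in Gamma -> x v = z v.

Definition is_norm_SymV {R : realType} {V : finType} (d : nat)
  (N : (V -> 'M[R]_d) -> R) : Prop :=
  [/\ forall x, SymV x -> 0 <= N x,
      forall x, SymV x -> N x = 0 -> x = (fun _ => 0),
      forall (a : R) x, SymV x -> N (fun v => a *: x v) = `|a| * N x
    & forall x y, SymV x -> SymV y -> N (fun v => x v + y v) <= N x + N y].

Definition phi_d {R : realType} {V : finType} (d : nat) (E : rel V)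
  (x : V -> 'M[R]_d) : R :=
  \sum_(v : V) \sum_(w : V | E v w) \tr (expmx (x v) *m expmx (- x w)).

Definition chi_d {R : realType} {V : finType} (d : nat) (E : rel V)
  (x : V -> 'M[R]_d) : R :=
  \sum_(v : V) \sum_(w : V | E v w) \tr (expmx (x v - x w)).

Definition coercive_on {R : realType} {X : Type} (S : X -> Prop)
  (N : X -> R) (f : X -> R) : Prop :=
  forall M : R, exists r : R, forall x, S x -> r < N x -> M < f x.

(* Main.v *)
Require Import Defs.
From HB Require Import structures.
From mathcomp Require Import all_boot all_order all_algebra.
From mathcomp Require Import all_classical all_reals all_analysis.
From mathcomp Require Import complex.
From mathcomp Require Import ring lra.
Set Implicit Arguments. Unset Strict Implicit. Unset Printing Implicit Defensive.
Import Order.TTheory GRing.Theory Num.Theory.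
Import numFieldNormedType.Exports.
Local Open Scope ring_scope.
Local Open Scope sesquilinear_scope.
Local Open Scope classical_set_scope.
Local Open Scope ring_scope.
Section ALG.
Variable R : realType.
Variable n : nat.
Definition Gm (a b : 'rV[R]_n) : 'M[R]_n := a^T *m a + b^T *m b.
Definition nrm (y : 'rV[R]_n) : R := (y *m y^T) 0 0.
Definition qf (M : 'M[R]_n) (y : 'rV[R]_n) : R := (y *m M *m y^T) 0 0.
Definition ww (a b y : 'rV[R]_n) : R := (y *m a^T) 0 0 ^+ 2 + (y *m b^T) 0 0 ^+ 2.

Lemma ex_max (I : finType) (f : I -> R) (i0 : I) : exists j, forall k, f k <= f j.
Proof.
case: (@arg_maxP _ _ _ i0 xpredT f erefl) => j _ Hj.
by exists j => k; apply: Hj.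
Qed.

Lemma entry11 (u v : 'rV[R]_n) : (u *m v^T) 0 0 = (v *m u^T) 0 0.
Proof. have -> : u *m v^T = (v *m u^T)^T by rewrite trmx_mul trmxK. by rewrite mxE. Qed.

Lemma mul1_00 (M : 'M[R]_(1,1)) (N : 'M[R]_(1,1)) : (M *m N) 0 0 = M 0 0 * N 0 0.
Proof. by rewrite mxE big_ord1. Qed.

Lemma qf_Gm a b y : qf (Gm a b) y = ww a b y.
Proof.
rewrite /qf /Gm /ww mulmxDr mulmxDl mxE.
have E : forall z : 'rV[R]_n, y *m (z^T *m z) *m y^T = (y *m z^T) *m (z *m y^T).
  by move=> z; rewrite !mulmxA.
by rewrite !E !mul1_00 (entry11 _ y) (entry11 _ y) !expr2.
Qed.

Lemma qf_sum (I : finType) (c : I -> R) (M : I -> 'M[R]_n) y :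
  qf (\sum_i c i *: M i) y = \sum_i c i * qf (M i) y.
Proof.
rewrite /qf mulmx_sumr mulmx_suml summxE; apply: eq_bigr => i _.
by rewrite -scalemxAr -scalemxAl mxE.
Qed.

Lemma qfB (M N : 'M[R]_n) y : qf (M - N) y = qf M y - qf N y.
Proof. by rewrite /qf mulmxBr mulmxBl !mxE. Qed.

Lemma qf1 y : qf 1%:M y = nrm y.
Proof. by rewrite /qf mulmx1. Qed.

Lemma nrm_ge0 y : 0 <= nrm y.
Proof. rewrite /nrm mxE; apply: sumr_ge0 => j _; rewrite mxE -expr2; exact: sqr_ge0. Qed.

Lemma ww_ge0 a b y : 0 <= ww a b y.
Proof. by rewrite /ww addr_ge0 // sqr_ge0. Qed.

Lemma tr_Gm a b Q : \tr (Gm a b *m Q) = qf Q a + qf Q b.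
Proof.
rewrite /Gm mulmxDl mxtraceD -!mulmxA !(mxtrace_mulC (_^T)) /qf.
by rewrite /mxtrace !big_ord1.
Qed.

Lemma tr_sum (I : finType) (c : I -> R) (M : I -> 'M[R]_n) Q :
  \tr ((\sum_i c i *: M i) *m Q) = \sum_i c i * \tr (M i *m Q).
Proof.
rewrite mulmx_suml raddf_sum; apply: eq_bigr => i _.
rewrite -scalemxAl; exact: mxtraceZ.
Qed.

Definition frame (a b : 'I_n -> 'rV[R]_n) :=
  (forall y, nrm y = \sum_i ww (a i) (b i) y) /\ (forall i, nrm (a i) + nrm (b i) = 1).

Lemma qf_lb (c e : 'I_n -> 'rV[R]_n) q (g : R) y :
  frame c e -> (forall j, g <= q j) ->
  g * nrm y <= qf (\sum_j q j *: Gm (c j) (e j)) y.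
Proof.
move=> [F1 _] Hq; rewrite qf_sum F1 mulr_sumr; apply: ler_sum => j _.
by rewrite qf_Gm ler_wpM2r // ww_ge0.
Qed.

Lemma qf_ub (c e : 'I_n -> 'rV[R]_n) q (g : R) y :
  frame c e -> (forall j, q j <= g) ->
  qf (\sum_j q j *: Gm (c j) (e j)) y <= g * nrm y.
Proof.
move=> [F1 _] Hq; rewrite qf_sum F1 mulr_sumr; apply: ler_sum => j _.
by rewrite qf_Gm ler_wpM2r // ww_ge0.
Qed.

Lemma tr_lb (a b c e : 'I_n -> 'rV[R]_n) p q (g : R) :
  frame a b -> frame c e -> (forall i, 0 <= p i) -> (forall j, g <= q j) -> 0 <= g ->
  0 <= \tr ((\sum_i p i *: Gm (a i) (b i)) *m (\sum_j q j *: Gm (c j) (e j))) /\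
  forall i, p i * g <= \tr ((\sum_i p i *: Gm (a i) (b i)) *m (\sum_j q j *: Gm (c j) (e j))).
Proof.
move=> [_ Fab] Fce Hp Hq g0.
have T : forall i, g <= \tr (Gm (a i) (b i) *m \sum_j q j *: Gm (c j) (e j)).
  move=> i; rewrite tr_Gm -[g]mulr1 -(Fab i) mulrDr.
  by apply: lerD; apply: qf_lb.
rewrite tr_sum; split.
  apply: sumr_ge0 => i _; apply: mulr_ge0 => //; exact: le_trans (T i).
move=> i; rewrite (bigD1 i) //= -[X in X <= _]addr0; apply: lerD.
  by apply: ler_wpM2l.
apply: sumr_ge0 => j _; apply: mulr_ge0 => //; exact: le_trans (T j).
Qed.

Lemma tr_dec (a b : 'I_n -> 'rV[R]_n) p :
  frame a b -> \tr (\sum_i p i *: Gm (a i) (b i)) = \sum_i p i.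
Proof.
move=> [_ Fab]; rewrite raddf_sum; apply: eq_bigr => i _.
change (\tr (p i *: Gm (a i) (b i)) = p i).
by rewrite mxtraceZ -[Gm _ _]mulmx1 tr_Gm !qf1 Fab mulr1.
Qed.

Lemma max_ge_avg (c e : 'I_n -> 'rV[R]_n) nu y1 y2 :
  frame c e -> nrm y1 + nrm y2 = 1 ->
  exists j, qf (\sum_j nu j *: Gm (c j) (e j)) y1 + qf (\sum_j nu j *: Gm (c j) (e j)) y2 <= nu j.
Proof.
move=> Fce H1.
case: (pickP (@predT 'I_n)) => [i0 _|H0]; last first.
  have E : forall F : 'I_n -> R, \sum_i F i = 0 by move=> F; rewrite big_pred0.
  exfalso; move: H1; rewrite /nrm !mxE !E add0r => /eqP; by rewrite eq_sym oner_eq0.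
have [j Hj] := @ex_max _ nu i0.
exists j; rewrite -[nu j]mulr1 -H1 mulrDr; apply: lerD; exact: qf_ub.
Qed.
End ALG.

Section EXP.
Variable R : realType.
Variable n : nat.
Lemma cvg_sum_mx (I : Type) (r : seq I) (u : I -> nat -> 'M[R]_n) (L : I -> 'M[R]_n) :
  (forall i, u i @ eventually --> L i) ->
  (fun N => \sum_(i <- r) u i N) @ eventually --> \sum_(i <- r) L i.
Proof.
move=> H; elim: r => [|a r IH].
  rewrite big_nil; under eq_fun do rewrite big_nil; exact: cvg_cst.
rewrite big_cons; under eq_fun do rewrite big_cons.
exact: cvgD.
Qed.

Lemma expmx_dec (A : 'M[R]_n) (l : 'I_n -> R) (G : 'I_n -> 'M[R]_n) :
 (forall k, A ^+ k = \sum_i l i ^+ k *: G i) -> expmx A = \sum_i expR (l i) *: G i.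
Proof.
move=> HA.
have E : series (fun k => k`!%:R^-1 *: A ^+ k) =
   (fun N => \sum_i (series (exp_coeff (l i)) N) *: G i).
  apply/funext => N; rewrite /series /=.
  under eq_bigr do rewrite HA scaler_sumr.
  rewrite exchange_big /=; apply: eq_bigr => i _.
  rewrite scaler_suml; apply: eq_bigr => k _.
  by rewrite scalerA /exp_coeff /= mulrC.
rewrite /expmx E; apply: cvg_lim; first exact: norm_hausdorff.
apply: (@cvg_sum_mx _ _ (fun i N => series (exp_coeff (l i)) N *: G i)) => i.
apply: cvgZr_tmp.
exact: (is_cvg_series_exp_coeff (l i)).
Qed.
End EXP.

Section SR.
Variable R : realType.
Local Notation C := (complex R).
Local Notation toC := (real_complex R).

Lemma ReD (x y : C) : complex.Re (x + y) = complex.Re x + complex.Re y. Proof. by case: x => a b; case: y => c e. Qed.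
Lemma ImD (x y : C) : complex.Im (x + y) = complex.Im x + complex.Im y. Proof. by case: x => a b; case: y => c e. Qed.
Lemma Re0 : complex.Re (0 : C) = 0. Proof. by []. Qed.
Lemma Im0 : complex.Im (0 : C) = 0. Proof. by []. Qed.
Lemma Re_sum (I : Type) (r : seq I) (F : I -> C) : complex.Re (\sum_(i <- r) F i) = \sum_(i <- r) complex.Re (F i).
Proof. elim: r => [|a r IH]; first by rewrite !big_nil. by rewrite !big_cons ReD IH. Qed.
Lemma Im_sum (I : Type) (r : seq I) (F : I -> C) : complex.Im (\sum_(i <- r) F i) = \sum_(i <- r) complex.Im (F i).
Proof. elim: r => [|a r IH]; first by rewrite !big_nil. by rewrite !big_cons ImD IH. Qed.
Lemma ReM (x y : C) : complex.Re (x * y) = complex.Re x * complex.Re y - complex.Im x * complex.Im y. Proof. by case: x => a b; case: y => c e. Qed.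
Lemma ImM (x y : C) : complex.Im (x * y) = complex.Re x * complex.Im y + complex.Im x * complex.Re y. Proof. case: x => a b; case: y => c e /=. ring. Qed.
Lemma Re_conj (x : C) : complex.Re (Num.conj_op x) = complex.Re x. Proof. by case: x. Qed.
Lemma Im_conj (x : C) : complex.Im (Num.conj_op x) = - complex.Im x. Proof. by case: x. Qed.
Lemma Re_toC r : complex.Re (toC r) = r. Proof. by []. Qed.
Lemma Im_toC r : complex.Im (toC r) = 0. Proof. by []. Qed.
Lemma toC_exp r k : toC r ^+ k = toC (r ^+ k).
Proof. elim: k => [|k IH]; rewrite ?expr0 // !exprS IH /toC /=. 
have -> : forall a b : R, (a +i* 0)%C * (b +i* 0)%C = (a * b +i* 0)%C.
  by move=> a b; rewrite /GRing.mul /= !mulr0 !mul0r subr0 addr0.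
by []. Qed.

Variable n : nat.

Lemma map_toC_exp (A : 'M[R]_n) k : map_mx toC (A ^+ k) = (map_mx toC A) ^+ k.
Proof.
elim: k => [|k IH]; first by rewrite !expr0 map_mx1.
by rewrite !exprSr -!mulmxE map_mxM IH.
Qed.

Lemma SR (A : 'M[R]_n) : A^T = A -> exists (l : 'I_n -> R) (a b : 'I_n -> 'rV[R]_n),
 [/\ forall k, A ^+ k = \sum_i (l i ^+ k) *: Gm (a i) (b i),
     forall i, nrm (a i) + nrm (b i) = 1,
     forall i, a i *m A = l i *: a i & forall i, b i *m A = l i *: b i].
Proof.
move=> sA.
set Ac := map_mx toC A.
have Asym : Ac \is symmetricmx.
  apply/is_hermitianmxP; rewrite expr0 scale1r map_mx_id // /Ac map_trmx sA //.
have Areal : Ac \is a mxOver Num.real.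
  by apply/mxOverP => i j; rewrite mxE complex_real.
have Aherm := realsym_hermsym Asym Areal.
have /orthomx_spectralP := hermitian_normalmx Aherm.
set P := spectralmx Ac; set sp := spectral_diag Ac => AE.
have Pu : P \is unitarymx := spectral_unitarymx Ac.
rewrite invmx_unitary // in AE.
have PPt : P *m P^t* = 1%:M by apply/unitarymxP.
have PtP : P^t* *m P = 1%:M by rewrite -invmx_unitary // mulVmx // unitarymx_unit.
have spR : forall i, sp 0 i = toC (complex.Re (sp 0 i)).
  move=> i; rewrite RRe_real //.
  by move/mxOverP: (hermitian_spectral_diag_real Aherm); apply.
have Ack : forall k, Ac ^+ k = P^t* *m diag_mx (\row_i (sp 0 i ^+ k)) *m P.
  elim => [|k IH].
    have -> : diag_mx (\row_i (sp 0 i ^+ 0)) = 1%:M.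
      by apply/matrixP => i j; rewrite !mxE expr0.
    by rewrite expr0 mulmx1 PtP.
  rewrite exprSr -mulmxE IH {1}AE.
  rewrite -!mulmxA (mulmxA P) PPt mul1mx (mulmxA (diag_mx _)) mulmx_diag.
  congr (_ *m (diag_mx _ *m _)); apply/rowP => j; rewrite !mxE exprSr //.
exists (fun i => complex.Re (sp 0 i)), (fun i => \row_x complex.Re (P i x)),
  (fun i => \row_x complex.Im (P i x)).
split.
- move=> k; apply/matrixP => x y.
  have -> : (A ^+ k) x y = complex.Re ((Ac ^+ k) x y).
    by rewrite /Ac -map_toC_exp mxE.
  rewrite Ack mul_mx_diag !mxE summxE Re_sum; apply: eq_bigr => i _.
  rewrite !mxE !big_ord1 !mxE spR toC_exp.
  rewrite !(ReM, ImM, Re_conj, Im_conj, Re_toC, Im_toC). ring.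
- move=> i; rewrite /nrm !mxE.
  have : complex.Re ((P *m P^t* ) i i) = 1 by rewrite PPt mxE eqxx.
  rewrite mxE Re_sum => <-. rewrite -big_split /=; apply: eq_bigr => x _.
  rewrite !mxE ReM Re_conj Im_conj. ring.
- have PA : P *m Ac = diag_mx sp *m P.
    by rewrite {1}AE !mulmxA PPt mul1mx.
  move=> i; apply/rowP => y.
  have := congr1 (fun M : 'M[C]_n => complex.Re (M i y)) PA.
  rewrite mul_diag_mx !mxE Re_sum => H.
  transitivity (\sum_j complex.Re (P i j * Ac j y)).
    by apply: eq_bigr => j _; rewrite /Ac !mxE ReM Re_toC Im_toC; ring.
  by rewrite H spR ReM Re_toC Im_toC; ring.
- have PA : P *m Ac = diag_mx sp *m P.
    by rewrite {1}AE !mulmxA PPt mul1mx.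
  move=> i; apply/rowP => y.
  have := congr1 (fun M : 'M[C]_n => complex.Im (M i y)) PA.
  rewrite mul_diag_mx !mxE Im_sum => H.
  transitivity (\sum_j complex.Im (P i j * Ac j y)).
    by apply: eq_bigr => j _; rewrite /Ac !mxE ImM Re_toC Im_toC; ring.
  by rewrite H spR ImM Re_toC Im_toC; ring.
Qed.
End SR.

Section EDGE.
Variable R : realType.
Variable n : nat.
Implicit Types (A B : 'M[R]_n) (a b c e : 'I_n -> 'rV[R]_n) (l m : 'I_n -> R).

Definition SRdata A l a b :=
  [/\ forall k, A ^+ k = \sum_i (l i ^+ k) *: Gm (a i) (b i),
      frame a b,
      forall i, a i *m A = l i *: a i & forall i, b i *m A = l i *: b i].

Lemma SRdata_ex A : A^T = A -> exists l a b, SRdata A l a b.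
Proof.
move=> sA; have [l [a [b [H1 H2 H3 H4]]]] := SR sA.
exists l, a, b; split => //; split => // y.
rewrite -qf1 (_ : 1%:M = A ^+ 0) // H1 qf_sum; apply: eq_bigr => i _.
by rewrite expr0 mul1r qf_Gm.
Qed.

Lemma SR_exp A l a b : SRdata A l a b ->
  expmx A = \sum_i expR (l i) *: Gm (a i) (b i).
Proof. by case=> H _ _ _; apply: expmx_dec. Qed.

Lemma SR_expN A l a b : SRdata A l a b ->
  expmx (- A) = \sum_i expR (- l i) *: Gm (a i) (b i).
Proof.
case=> H _ _ _; apply: expmx_dec => k.
have ZX : forall (c : R) (M : 'M[R]_n) k, (c *: M) ^+ k = c ^+ k *: M ^+ k.
  move=> c M; elim => [|j IH]; first by rewrite !expr0 scale1r.
  by rewrite !exprS -!mulmxE IH -scalemxAl -scalemxAr scalerA.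
rewrite -[- A]scaleN1r ZX H scaler_sumr; apply: eq_bigr => i _.
by rewrite scalerA -exprMn mulN1r.
Qed.

Lemma SR_1 A l a b : SRdata A l a b -> A = \sum_i l i *: Gm (a i) (b i).
Proof.
case=> H _ _ _; rewrite -[A]expr1 H; apply: eq_bigr => i _; by rewrite expr1.
Qed.

Lemma qf_eig A y (r : R) : y *m A = r *: y -> qf A y = r * nrm y.
Proof. by move=> H; rewrite /qf H -scalemxAl mxE. Qed.

Lemma phi_lb1 A B l a b m c e (beta : R) :
  SRdata A l a b -> SRdata B m c e -> (forall j, m j <= beta) ->
  0 <= \tr (expmx A *m expmx (- B)) /\
  forall i, expR (l i - beta) <= \tr (expmx A *m expmx (- B)).
Proof.
move=> HA HB Hm.
rewrite (SR_exp HA) (SR_expN HB).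
have [] := @tr_lb _ _ a b c e (fun i => expR (l i)) (fun j => expR (- m j)) (expR (- beta)).
- by case: HA.
- by case: HB.
- by move=> i; apply: expR_ge0.
- by move=> j; rewrite ler_expR lerN2.
- by apply: expR_ge0.
move=> H0 H; split => // i; by rewrite expRD H.
Qed.

Lemma phi_lb2 A B l a b m c e (alpha : R) :
  SRdata A l a b -> SRdata B m c e -> (forall i, alpha <= l i) ->
  forall j, expR (alpha - m j) <= \tr (expmx A *m expmx (- B)).
Proof.
move=> HA HB Hl j.
rewrite mxtrace_mulC (SR_exp HA) (SR_expN HB).
have [] := @tr_lb _ _ c e a b (fun j => expR (- m j)) (fun i => expR (l i)) (expR alpha).
- by case: HB.
- by case: HA.
- by move=> i; apply: expR_ge0.
- by move=> i; rewrite ler_expR.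
- by apply: expR_ge0.
move=> _ H; by rewrite addrC expRD H.
Qed.

Lemma chi_ge0 C nu c e : SRdata C nu c e -> 0 <= \tr (expmx C).
Proof.
move=> HC; rewrite (SR_exp HC) tr_dec; last by case: HC.
by apply: sumr_ge0 => j _; apply: expR_ge0.
Qed.

Lemma chi_core C nu c e (s : R) y1 y2 : SRdata C nu c e -> nrm y1 + nrm y2 = 1 ->
  s <= qf C y1 + qf C y2 -> expR s <= \tr (expmx C).
Proof.
move=> HC Hy Hs.
have Fce : frame c e by case: HC.
have [j Hj] := max_ge_avg nu Fce Hy.
rewrite -(SR_1 HC) in Hj.
rewrite (SR_exp HC) tr_dec //.
apply: le_trans (_ : expR (nu j) <= _).
  by rewrite ler_expR; apply: le_trans Hj.
rewrite (bigD1 j) //= lerDl; apply: sumr_ge0 => k _; exact: expR_ge0.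
Qed.

Lemma chi_lb1 A B l a b m c e nu c' e' (beta : R) :
  SRdata A l a b -> SRdata B m c e -> SRdata (A - B) nu c' e' -> (forall j, m j <= beta) ->
  forall i, expR (l i - beta) <= \tr (expmx (A - B)).
Proof.
move=> HA HB HC Hm i.
have [_ [_ Fab] Ea Eb] := HA.
apply: (chi_core HC (Fab i)).
rewrite !qfB (qf_eig (Ea i)) (qf_eig (Eb i)).
have FB : frame c e by case: HB.
have U1 := qf_ub (a i) FB Hm; have U2 := qf_ub (b i) FB Hm.
rewrite -(SR_1 HB) in U1 U2.
have E : l i - beta = (l i * nrm (a i) - beta * nrm (a i)) + (l i * nrm (b i) - beta * nrm (b i)).
  by rewrite -mulrBl -mulrBl -mulrDr (Fab i) mulr1.
rewrite E; apply: lerD; apply: lerB => //.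
Qed.

Lemma chi_lb2 A B l a b m c e nu c' e' (alpha : R) :
  SRdata A l a b -> SRdata B m c e -> SRdata (A - B) nu c' e' -> (forall i, alpha <= l i) ->
  forall j, expR (alpha - m j) <= \tr (expmx (A - B)).
Proof.
move=> HA HB HC Hl j.
have [_ [_ Fce] Ec Ee] := HB.
apply: (chi_core HC (Fce j)).
rewrite !qfB (qf_eig (Ec j)) (qf_eig (Ee j)).
have FA : frame a b by case: HA.
have U1 := qf_lb (c j) FA Hl; have U2 := qf_lb (e j) FA Hl.
rewrite -(SR_1 HA) in U1 U2.
have E : alpha - m j = (alpha * nrm (c j) - m j * nrm (c j)) + (alpha * nrm (e j) - m j * nrm (e j)).
  by rewrite -mulrBl -mulrBl -mulrDr (Fce j) mulr1.
rewrite E; apply: lerD; apply: lerB => //.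
Qed.
End EDGE.

Section GRAPH.
Variable T : finType.

Lemma acyclic_uniq (e : rel T) v p : acyclic e -> path e v p -> uniq (v :: p).
Proof.
move=> Ac; elim: p v => [//|w p IH] v Hp.
have /andP[evw Hwp] := Hp.
rewrite cons_uniq IH // andbT; apply/negP => Hv.
move: Hp; move: (w :: p) Hv => s Hv Hs.
case/splitPr: Hv Hs => p1 p2; rewrite cat_path => /andP[H1 /andP[H2 _]].
have := Ac v (rcons p1 v); rewrite last_rcons eqxx rcons_path H1 H2 /=.
by case: p1 {H1 H2} => [|x p1] /=; move=> /(_ isT isT).
Qed.

Lemma acyclic_size (e : rel T) v p : acyclic e -> path e v p -> (size p < #|T|)%N.
Proof.
move=> Ac Hp; have U := acyclic_uniq Ac Hp.
have := uniq_leq_size U (fun x _ => mem_enum T x).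
by rewrite -cardE.
Qed.

Lemma acyclic_rev (e : rel T) : acyclic e -> acyclic (fun a b => e b a).
Proof.
move=> Ac v p Hn Hp; apply/negP => /eqP Hl.
have := rev_path e v p; rewrite Hp Hl => Hr.
case: p Hn Hp Hl Hr => [//|w p] _ _ _ Hr.
have := Ac v (rev (belast v (w :: p))).
rewrite Hr /= rev_cons last_rcons eqxx.
have -> : rcons (rev (belast w p)) v != [::] by case: (rev _).
by move=> /(_ isT isT).
Qed.

Lemma height_bound (R : realType) (e : rel T) (Q : T -> R -> Prop) (L c : R) :
 acyclic e -> 0 <= c ->
 (forall v, (forall w, ~~ e v w) -> Q v L) ->
 (forall v w b, e v w -> Q w b -> Q v (b + c)) ->
 (forall v b b', b <= b' -> Q v b -> Q v b') ->
 forall v, Q v (L + #|T|%:R * c).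
Proof.
move=> Ac c0 Hsink Hstep Hmono.
have claim : forall k v, (exists p, path e v p /\ size p = k) \/ Q v (L + k%:R * c).
  elim => [|k IH] v; first by left; exists [::].
  case: (boolP [exists w, e v w]) => [/existsP[w evw]|H].
    case: (IH w) => [[p [Hp Hs]]|Hq].
      by left; exists (w :: p); rewrite /= evw Hp Hs.
    right; apply: Hmono (Hstep _ _ _ evw Hq).
    by rewrite -addrA lerD2l mulrSr mulrDl mul1r.
  right; apply: Hmono (Hsink v _).
    by rewrite lerDl mulr_ge0.
  by move=> w; apply/negP => ew; move/negP: H; apply; apply/existsP; exists w.
move=> v; case: (claim #|T| v) => // [[p [Hp Hs]]].
by have := acyclic_size Ac Hp; rewrite Hs ltnn.
Qed.
End GRAPH.

Section NORM.
Variable R : realType.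
Variable V : finType.
Variable d : nat.
Variable N : (V -> 'M[R]_d) -> R.
Hypothesis HN : is_norm_SymV N.

Lemma SymV_sum (I : Type) (s : seq I) (F : I -> V -> 'M[R]_d) :
  (forall i, SymV (F i)) -> SymV (fun v => \sum_(i <- s) F i v).
Proof.
move=> HF v; rewrite /symmx raddf_sum; apply: eq_bigr => i _; exact: HF.
Qed.

Lemma N0 : N (fun _ => 0) = 0.
Proof.
case: HN => _ _ Hz _.
have := Hz 0 (fun _ => 0) (fun v => @trmx0 _ d d).
rewrite normr0 mul0r.
have -> : (fun v : V => 0 *: (0 : 'M[R]_d)) = (fun _ => 0) by apply/funext => v; rewrite scale0r.
by [].
Qed.

Lemma norm_sum (I : Type) (s : seq I) (F : I -> V -> 'M[R]_d) :
  (forall i, SymV (F i)) -> N (fun v => \sum_(i <- s) F i v) <= \sum_(i <- s) N (F i).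
Proof.
move=> HF; case: HN => _ _ _ Htri.
elim: s => [|a s IH].
  rewrite big_nil; under eq_fun do rewrite big_nil; by rewrite N0.
rewrite big_cons; under eq_fun do rewrite big_cons.
apply: le_trans (Htri _ _ (HF a) (SymV_sum s HF)) _.
by rewrite lerD2l.
Qed.

Lemma NZ (c : R) (x : V -> 'M[R]_d) : SymV x -> N (fun v => c *: x v) = `|c| * N x.
Proof. by case: HN => _ _ Hz _; apply: Hz. Qed.

Definition Bas (v0 : V) (a b : 'I_d) : V -> 'M[R]_d :=
  fun v => (v == v0)%:R *: (delta_mx a b + delta_mx b a).

Lemma Bas_sym v0 a b : SymV (Bas v0 a b).
Proof. by move=> v; rewrite /symmx /Bas linearZ /= linearD /= !trmx_delta addrC. Qed.

Lemma sym_decomp (M : 'M[R]_d) : M^T = M ->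
  M = \sum_a \sum_b (M a b / 2) *: (delta_mx a b + delta_mx b a).
Proof.
move=> sM.
have E1 := matrix_sum_delta M.
have E2 : M = \sum_a \sum_b M a b *: delta_mx b a.
  rewrite -{1}sM {1}E1 raddf_sum; apply: eq_bigr => a _.
  rewrite raddf_sum; apply: eq_bigr => b _.
  by rewrite -trmx_delta; apply/matrixP => i j; rewrite !mxE.
have -> : \sum_a \sum_b (M a b / 2) *: (delta_mx a b + delta_mx b a) =
   2^-1 *: ((\sum_a \sum_b M a b *: delta_mx a b) + \sum_a \sum_b M a b *: delta_mx b a).
  rewrite -big_split scaler_sumr; apply: eq_bigr => a _.
  rewrite -big_split scaler_sumr; apply: eq_bigr => b _.
  by rewrite /= !scalerDr !scalerA mulrC.
rewrite -E1 -E2 scalerDr -scalerDl.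
by rewrite (_ : 2^-1 + 2^-1 = 1 :> R) ?scale1r //; field.
Qed.

Lemma SymVZ (c : R) (x : V -> 'M[R]_d) : SymV x -> SymV (fun v => c *: x v).
Proof. by move=> Hx v; rewrite /symmx linearZ /= Hx. Qed.

Lemma N_ge0 x : SymV x -> 0 <= N x.
Proof. by case: HN => H _ _ _; apply: H. Qed.

Lemma norm_bound (x : V -> 'M[R]_d) (beta : R) : SymV x ->
  (forall v a b, `|x v a b| <= beta) ->
  N x <= beta * \sum_v0 \sum_a \sum_b (N (Bas v0 a b) / 2).
Proof.
move=> Sx Hb.
have Ex : x = fun v => \sum_v0 \sum_a \sum_b (x v0 a b / 2) *: Bas v0 a b v.
  apply/funext => v.
  have E : forall v0, \sum_a \sum_b (x v0 a b / 2) *: Bas v0 a b v = (v == v0)%:R *: x v0.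
    move=> v0; rewrite [in RHS](sym_decomp (Sx v0)) scaler_sumr; apply: eq_bigr => a _.
    rewrite scaler_sumr; apply: eq_bigr => b _.
    by rewrite /Bas !scalerA mulrC.
  under eq_bigr do rewrite E.
  rewrite (bigD1 v) //= eqxx scale1r big1 ?addr0 // => v0 /negPf.
  by rewrite eq_sym => ->; rewrite scale0r.
rewrite {1}Ex.
have S3 : forall v0 a b, SymV (fun v => (x v0 a b / 2) *: Bas v0 a b v).
  by move=> v0 a b; apply: SymVZ; apply: Bas_sym.
have S2 : forall v0 a, SymV (fun v => \sum_b (x v0 a b / 2) *: Bas v0 a b v).
  by move=> v0 a; apply: SymV_sum => b; exact: S3.
have S1 : forall v0, SymV (fun v => \sum_a \sum_b (x v0 a b / 2) *: Bas v0 a b v).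
  by move=> v0; apply: SymV_sum => a; exact: S2.
apply: le_trans (norm_sum (F := fun v0 v => \sum_a \sum_b (x v0 a b / 2) *: Bas v0 a b v) (index_enum V) S1) _.
rewrite mulr_sumr; apply: ler_sum => v0 _.
apply: le_trans (norm_sum (F := fun a v => \sum_b (x v0 a b / 2) *: Bas v0 a b v) (index_enum _) (S2 v0)) _.
rewrite mulr_sumr; apply: ler_sum => a _.
apply: le_trans (norm_sum (F := fun b v => (x v0 a b / 2) *: Bas v0 a b v) (index_enum _) (S3 v0 a)) _.
rewrite mulr_sumr; apply: ler_sum => b _.
rewrite NZ; last exact: Bas_sym.
rewrite normrM (ger0_norm (_ : 0 <= 2^-1)) ?invr_ge0 ?ler0n //.
rewrite mulrAC mulrA; apply: ler_wpM2r; first by rewrite invr_ge0 ler0n.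
apply: ler_wpM2r; [exact: N_ge0 (Bas_sym _ _ _)| exact: Hb].
Qed.
End NORM.

Section ENTRY.
Variable R : realType.
Variable n : nat.

Lemma coord_le (y : 'rV[R]_n) j : y 0 j ^+ 2 <= nrm y.
Proof.
rewrite /nrm mxE (bigD1 j) //= mxE -expr2 lerDl.
by apply: sumr_ge0 => k _; rewrite mxE -expr2 sqr_ge0.
Qed.

Lemma Gm_entry (a b : 'rV[R]_n) x y : nrm a + nrm b = 1 -> `|Gm a b x y| <= 1.
Proof.
move=> H; rewrite /Gm !mxE !big_ord1 !mxE.
have h1 := coord_le a x; have h2 := coord_le a y.
have h3 := coord_le b x; have h4 := coord_le b y.
have na := nrm_ge0 a; have nb := nrm_ge0 b.
set ax := a 0 x in h1 *; set ay := a 0 y in h2 *; set bx := b 0 x in h3 *; set by_ := b 0 y in h4 *.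
clearbody ax ay bx by_.
have s1 := sqr_ge0 (ax - ay); have s2 := sqr_ge0 (ax + ay).
have s3 := sqr_ge0 (bx - by_); have s4 := sqr_ge0 (bx + by_).
rewrite !expr2 in h1 h2 h3 h4 s1 s2 s3 s4.
rewrite ler_norml; apply/andP; split.
- nra.
- nra.
Qed.

Lemma entry_bound (A : 'M[R]_n) l a b (g : R) : SRdata A l a b ->
  (forall i, `|l i| <= g) -> forall x y, `|A x y| <= n%:R * g.
Proof.
move=> HA Hl x y; have [_ [_ Fab] _ _] := HA.
rewrite (SR_1 HA) summxE.
apply: le_trans (ler_norm_sum _ _ _) _.
apply: le_trans (_ : \sum_(i < n) g <= _); last by rewrite sumr_const card_ord mulr_natl.
apply: ler_sum => i _; rewrite mxE normrM -[g]mulr1.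
by apply: ler_pM; [exact: normr_ge0|exact: normr_ge0|exact: Hl|exact: Gm_entry].
Qed.
End ENTRY.

Section MAIN.
Variable R : realType.

Lemma le_ln_of_exp (t M : R) : expR t <= M -> t <= ln M.
Proof.
move=> H; have M0 : 0 < M by apply: lt_le_trans (expR_gt0 t) H.
by rewrite -(expRK t) ler_ln // ?posrE ?expR_gt0.
Qed.

Lemma coercive_generic (V : finType) (E : rel V) (d : nat) (Gamma : {set V})
  (z : V -> 'M[R]_d) (N : (V -> 'M[R]_d) -> R) (T : 'M[R]_d -> 'M[R]_d -> R) :
  acyclic E ->
  (forall v, is_sink E v -> v \in Gamma) ->
  (forall v, is_source E v -> v \in Gamma) ->
  (forall v, v \in Gamma -> symmx (z v)) ->
  is_norm_SymV N ->
  (forall A B l a b m c e, A^T = A -> B^T = B -> SRdata A l a b -> SRdata B m c e ->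
     [/\ 0 <= T A B,
         forall beta, (forall j, m j <= beta) -> forall i, expR (l i - beta) <= T A B
       & forall alpha, (forall i, alpha <= l i) -> forall j, expR (alpha - m j) <= T A B]) ->
  coercive_on (SymVz Gamma z) N (fun x => \sum_(v : V) \sum_(w : V | E v w) T (x v) (x w)).
Proof.
move=> Ac Hsink Hsrc Hz HN HT M.
pose M' := Num.max M 1.
have M'1 : 1 <= M' by rewrite le_max lexx orbT.
have MM' : M <= M' by rewrite le_max lexx.
pose c := ln M'.
have c0 : 0 <= c by apply: ln_ge0.
have H0 : forall v : V, exists t : ('I_d -> R) * ('I_d -> 'rV[R]_d) * ('I_d -> 'rV[R]_d),
   v \in Gamma -> SRdata (z v) t.1.1 t.1.2 t.2.
  move=> v; case: (boolP (v \in Gamma)) => Hv.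
    have [l [a [b H]]] := SRdata_ex (Hz v Hv).
    by exists (l, a, b).
  by exists ((fun _ => 0), (fun _ => 0), (fun _ => 0)).
have [zd Hzd] := choice H0.
pose L0 := \sum_v \sum_i `|(zd v).1.1 i|.
have L0b : forall v i, `|(zd v).1.1 i| <= L0.
  move=> v i; rewrite /L0 (bigD1 v) //= (bigD1 i) //= -addrA lerDl.
  apply: addr_ge0; apply: sumr_ge0 => *; [exact: normr_ge0|].
  by apply: sumr_ge0 => *; exact: normr_ge0.
pose g := L0 + #|V|%:R * c.
pose K := \sum_v0 \sum_a \sum_b (N (@Bas R V d v0 a b) / 2).
exists (d%:R * g * K) => x [Sx Gx] Hr.
rewrite ltNge; apply/negP => Hf.
have Hf' : (\sum_v \sum_(w | E v w) T (x v) (x w)) <= M' by apply: le_trans Hf MM'.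
have HX1 : forall v : V, exists t : ('I_d -> R) * ('I_d -> 'rV[R]_d) * ('I_d -> 'rV[R]_d),
   SRdata (x v) t.1.1 t.1.2 t.2 /\ (v \in Gamma -> t = zd v).
  move=> v; case: (boolP (v \in Gamma)) => Hv.
    exists (zd v); split => //; rewrite Gx //; exact: Hzd.
  have [l [a [b H]]] := SRdata_ex (Sx v).
  by exists (l, a, b).
have [xd Hxd] := choice HX1.
have Tle : forall v w, E v w -> T (x v) (x w) <= M'.
  move=> v w Evw; apply: le_trans Hf'.
  have T0 : forall v w, E v w -> 0 <= T (x v) (x w).
    move=> v' w' E'; have [H1 _] := Hxd v'; have [H2 _] := Hxd w'.
    by have [] := HT _ _ _ _ _ _ _ _ (Sx v') (Sx w') H1 H2.
  rewrite (bigD1 v) //= (bigD1 w) //= -addrA lerDl.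
  apply: addr_ge0.
    by apply: sumr_ge0 => i /andP[Ei _]; exact: T0.
  by apply: sumr_ge0 => u _; apply: sumr_ge0 => i Ei; exact: T0.
have dataG : forall v, v \in Gamma -> xd v = zd v by move=> v Hv; case: (Hxd v) => _; apply.
have UB : forall v i, (xd v).1.1 i <= g.
  move=> v i.
  have := @height_bound V R E (fun v b => forall i, (xd v).1.1 i <= b) L0 c Ac c0.
  apply => //.
  - move=> u Hu j; rewrite dataG; last exact: Hsink.
    by apply: le_trans (real_ler_norm _) (L0b u j); rewrite num_real.
  - move=> u w b Euw Hw j.
    have [H1 _] := Hxd u; have [H2 _] := Hxd w.
    have [_ H _] := HT _ _ _ _ _ _ _ _ (Sx u) (Sx w) H1 H2.
    have := le_ln_of_exp (le_trans (H b Hw j) (Tle _ _ Euw)).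
    by rewrite -/c lerBlDl addrC.
  - by move=> u b b' bb Hb j; apply: le_trans (Hb j) bb.
have LB : forall v i, - g <= (xd v).1.1 i.
  move=> v i.
  have := @height_bound V R (fun a b => E b a) (fun v b => forall i, - b <= (xd v).1.1 i) L0 c (acyclic_rev Ac) c0.
  apply => //.
  - move=> u Hu j; rewrite dataG; last exact: Hsrc.
    rewrite lerNl; apply: le_trans (L0b u j).
    by rewrite -normrN real_ler_norm // num_real.
  - move=> u w b Ewu Hw j.
    have [H1 _] := Hxd u; have [H2 _] := Hxd w.
    have [_ _ H] := HT _ _ _ _ _ _ _ _ (Sx w) (Sx u) H2 H1.
    have := le_ln_of_exp (le_trans (H (- b) Hw j) (Tle _ _ Ewu)).
    rewrite -/c => h; rewrite opprD lerBlDr; apply: le_trans _ (lerD (lexx _) h).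
    by rewrite addrC subrK.
  - move=> u b b' bb Hb j; apply: le_trans (Hb j); by rewrite lerN2.
have EB : forall v a b, `|x v a b| <= d%:R * g.
  move=> v a b; have [H1 _] := Hxd v.
  apply: (entry_bound H1) => i.
  by rewrite ler_norml LB UB.
have := norm_bound HN Sx EB.
rewrite -/K => Hle.
by have := lt_le_trans Hr Hle; rewrite ltxx.
Qed.
End MAIN.

Theorem mainTheorem14 (R : realType) (V : finType) (E : rel V) (d : nat)
  (Gamma : {set V}) (z : V -> 'M[R]_d) :
  loopless E ->
  acyclic E ->
  (forall v, is_sink E v -> v \in Gamma) ->
  (forall v, is_source E v -> v \in Gamma) ->
  (exists v, v \notin Gamma) ->
  (forall v, v \in Gamma -> symmx (z v)) ->
  forall N : (V -> 'M[R]_d) -> R, is_norm_SymV N ->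
    coercive_on (SymVz Gamma z) N (phi_d E) /\
    coercive_on (SymVz Gamma z) N (chi_d E).
Proof.
move=> _ Ac Hsink Hsrc _ Hz N HN; split.
- rewrite /phi_d.
  apply: (coercive_generic (T := fun A B => \tr (expmx A *m expmx (- B)))) => //.
  move=> A B l a b m c e sA sB HA HB; split.
  + have Hb : forall j, m j <= \sum_k `|m k|.
      move=> j; apply: le_trans (real_ler_norm _) _; first by rewrite num_real.
      rewrite (bigD1 j) //= lerDl; apply: sumr_ge0 => *; exact: normr_ge0.
    exact: (proj1 (phi_lb1 HA HB Hb)).
  + move=> beta Hb i; exact: (proj2 (phi_lb1 HA HB Hb)).
  + move=> alpha Ha j; exact: (phi_lb2 HA HB Ha).
- rewrite /chi_d.
  apply: (coercive_generic (T := fun A B => \tr (expmx (A - B)))) => //.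
  move=> A B l a b m c e sA sB HA HB.
  have sC : (A - B)^T = A - B by rewrite linearB /= sA sB.
  have [nu [c' [e' HC]]] := SRdata_ex sC.
  split.
  + exact: chi_ge0 HC.
  + move=> beta Hb i; exact: (chi_lb1 HA HB HC Hb).
  + move=> alpha Ha j; exact: (chi_lb2 HA HB HC Ha).
Qed.
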